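(* Let $(X,d)$ be a geodesic metric space, $p\in X$, $\epsilon>0$ and $M>0$. Then there exists $C=C(\epsilon,M)\ge1$ such that for every pair of points $x,y\in X$ with $d(x,y)\le M$ and every $d$-geodesic $[x,y]$ from $x$ to $y$, $$l_{d_\epsilon}([x,y])\le C\,d_\epsilon(x,y).$$
   Context: Uniformized metric: $d_\epsilon(x,y)=\inf_\gamma\int_\gamma e^{-\epsilon d(p,z)}\,ds(z)$, infimum over $d$-rectifiable curves from $x$ to $y$ (integral with respect to $d$-arclength); $l_{d_\epsilon}(\gamma)$ denotes the length of $\gamma$ with respect to $d_\epsilon$. *)

(* Defs.v *)
From Stdlib Require Import Reals.
From Coquelicot Require Import Coquelicot.
Open Scope R_scope.

Definition is_metric {X : Type} (d : X -> X -> R) : Prop :=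
  (forall x y, 0 <= d x y) /\
  (forall x y, d x y = 0 <-> x = y) /\
  (forall x y, d x y = d y x) /\
  (forall x y z, d x z <= d x y + d y z).

Fixpoint sumR (n : nat) (f : nat -> R) : R :=
  match n with
  | O => 0
  | S k => sumR k f + f k
  end.

Definition is_partition (a b : R) (n : nat) (t : nat -> R) : Prop :=
  t O = a /\ t n = b /\ (forall i, (i < n)%nat -> t i <= t (S i)).

Definition curve_length {X : Type} (dist : X -> X -> R) (gamma : R -> X) (a b : R) : Rbar :=
  Lub_Rbar (fun s => exists (n : nat) (t : nat -> R), is_partition a b n t /\
     s = sumR n (fun i => dist (gamma (t i)) (gamma (t (S i))))).

Definition is_curve {X : Type} (d : X -> X -> R) (gamma : R -> X) (a b : R) : Prop :=
  a <= b /\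
  forall s, a <= s <= b -> forall e, 0 < e -> exists delta, 0 < delta /\
    forall s', a <= s' <= b -> Rabs (s' - s) < delta -> d (gamma s) (gamma s') < e.

Definition rectifiable {X : Type} (d : X -> X -> R) (gamma : R -> X) (a b : R) : Prop :=
  is_curve d gamma a b /\ is_finite (curve_length d gamma a b).

(* Line integral  \int_gamma rho ds  (w.r.t. d-arclength), for a rectifiable curve and
   a continuous bounded rho >= 0: supremum of lower sums
   sum_i (inf_{[t_i,t_{i+1}]} rho o gamma) * l_d(gamma|[t_i,t_{i+1}]). *)
Definition line_integral {X : Type} (d : X -> X -> R) (rho : X -> R)
    (gamma : R -> X) (a b : R) : Rbar :=
  Lub_Rbar (fun v => exists (n : nat) (t : nat -> R), is_partition a b n t /\
     v = sumR n (fun i =>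
           real (Glb_Rbar (fun r => exists s, t i <= s <= t (S i) /\ r = rho (gamma s)))
           * real (curve_length d gamma (t i) (t (S i))))).

Definition uniformized {X : Type} (d : X -> X -> R) (p : X) (eps : R) (x y : X) : R :=
  real (Glb_Rbar (fun v => exists (gamma : R -> X) (a b : R),
     rectifiable d gamma a b /\ gamma a = x /\ gamma b = y /\
     Finite v = line_integral d (fun z => exp (- eps * d p z)) gamma a b)).

Definition is_geodesic {X : Type} (d : X -> X -> R) (gamma : R -> X) (x y : X) : Prop :=
  gamma 0 = x /\ gamma (d x y) = y /\
  forall s t, 0 <= s <= d x y -> 0 <= t <= d x y -> d (gamma s) (gamma t) = Rabs (s - t).

Definition geodesic_space {X : Type} (d : X -> X -> R) : Prop :=
  is_metric d /\ forall x y : X, exists gamma, is_geodesic d gamma x y.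

(* Main.v *)
Require Import Defs.
From Stdlib Require Import Reals Lra Lia Classical.
From Coquelicot Require Import Coquelicot.
Open Scope R_scope.

Lemma exp_le' x y : x <= y -> exp x <= exp y.
Proof. intros [H|H]; [left; apply exp_increasing; auto | subst; lra]. Qed.

Lemma lub_le (E : R -> Prop) (B : R) :
  (forall s, E s -> s <= B) -> Rbar_le (Lub_Rbar E) (Finite B).
Proof. intros H. destruct (Lub_Rbar_correct E) as [_ H2]. apply H2. intros s Hs. apply H; auto. Qed.

Lemma lub_ge (E : R -> Prop) s : E s -> Rbar_le (Finite s) (Lub_Rbar E).
Proof. intros H. destruct (Lub_Rbar_correct E) as [H1 _]. apply H1; auto. Qed.

Lemma lub_fin (E : R -> Prop) s B : E s -> (forall s, E s -> s <= B) ->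
  Lub_Rbar E = Finite (real (Lub_Rbar E)) /\ s <= real (Lub_Rbar E) <= B.
Proof. intros Hs HB. pose proof (lub_le E B HB). pose proof (lub_ge E s Hs).
  destruct (Lub_Rbar E); simpl in *; try tauto. Qed.

Lemma glb_ge (E : R -> Prop) (B : R) :
  (forall s, E s -> B <= s) -> Rbar_le (Finite B) (Glb_Rbar E).
Proof. intros H. destruct (Glb_Rbar_correct E) as [_ H2]. apply H2. intros s Hs. apply H; auto. Qed.

Lemma glb_le (E : R -> Prop) s : E s -> Rbar_le (Glb_Rbar E) (Finite s).
Proof. intros H. destruct (Glb_Rbar_correct E) as [H1 _]. apply H1; auto. Qed.

Lemma glb_fin (E : R -> Prop) s B : E s -> (forall s, E s -> B <= s) ->
  B <= real (Glb_Rbar E) <= s.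
Proof. intros Hs HB. pose proof (glb_ge E B HB). pose proof (glb_le E s Hs).
  destruct (Glb_Rbar E); simpl in *; try tauto. Qed.

Lemma real_nonneg x : Rbar_le (Finite 0) x -> 0 <= real x.
Proof. destruct x; simpl; intros; try lra; tauto. Qed.

Lemma glb_real_nonneg (E : R -> Prop) : (forall v, E v -> 0 <= v) -> 0 <= real (Glb_Rbar E).
Proof. intros H. apply real_nonneg, glb_ge; auto. Qed.

Lemma sumR_le n f g : (forall i, (i < n)%nat -> f i <= g i) -> sumR n f <= sumR n g.
Proof. induction n; simpl; intros H; [lra|]. pose proof (H n ltac:(lia)).
  assert (sumR n f <= sumR n g) by (apply IHn; intros; apply H; lia). lra. Qed.

Lemma sumR_ext n f g : (forall i, (i < n)%nat -> f i = g i) -> sumR n f = sumR n g.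
Proof. induction n; simpl; intros H; auto. rewrite (H n ltac:(lia)), IHn; auto; intros; apply H; lia. Qed.

Lemma sumR_nonneg n f : (forall i, (i < n)%nat -> 0 <= f i) -> 0 <= sumR n f.
Proof. induction n; simpl; intros H; [lra|]. pose proof (H n ltac:(lia)).
  assert (0 <= sumR n f) by (apply IHn; intros; apply H; lia). lra. Qed.

Lemma tele n (t : nat -> R) : sumR n (fun i => t (S i) - t i) = t n - t O.
Proof. induction n; simpl; [lra|]. rewrite IHn. lra. Qed.

Lemma part_bounds a b n t : is_partition a b n t -> forall i, (i <= n)%nat -> a <= t i <= b.
Proof. intros [H0 [Hn Hm]] i Hi. split.
  - clear Hn. induction i. rewrite H0; lra. pose proof (Hm i ltac:(lia)). specialize (IHi ltac:(lia)). lra.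
  - rewrite <- Hn. remember (n - i)%nat as k. assert (n = i + k)%nat by lia. subst n. clear Heqk Hi Hn.
    induction k. rewrite Nat.add_0_r; lra. pose proof (Hm (i + k)%nat ltac:(lia)).
    replace (i + S k)%nat with (S (i + k)) by lia. assert (t i <= t (i+k)%nat). apply IHk. intros; apply Hm; lia. lra. Qed.

Definition two_part (s t : R) := fun i : nat => match i with O => s | _ => t end.
Lemma two_part_ok s t : s <= t -> is_partition s t 1 (two_part s t).
Proof. intros H. split; [reflexivity|split; [reflexivity|]]. intros i Hi. destruct i; simpl; [lra|lia]. Qed.

Section Geo.
Context {X : Type} (d : X -> X -> R) (Hm : is_metric d) (gam : R -> X) (x y : X)
  (Hg : is_geodesic d gam x y).

Lemma geo_sum s t n tt : 0 <= s -> t <= d x y -> is_partition s t n tt ->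
  sumR n (fun i => d (gam (tt i)) (gam (tt (S i)))) = t - s.
Proof. intros Hs Ht Hp. destruct Hg as [_ [_ Hgd]].
  pose proof (part_bounds _ _ _ _ Hp) as Hb.
  destruct Hp as [H0 [Hn Hmo]].
  rewrite <- H0, <- Hn, <- tele. apply sumR_ext. intros i Hi.
  pose proof (Hb i ltac:(lia)). pose proof (Hb (S i) ltac:(lia)). pose proof (Hmo i Hi).
  rewrite Hgd by lra. rewrite Rabs_left1 by lra. lra. Qed.

Lemma geo_len s t : 0 <= s <= t -> t <= d x y ->
  curve_length d gam s t = Finite (t - s).
Proof. intros Hs Ht. unfold curve_length.
  assert (E : forall v, (exists n tt, is_partition s t n tt /\ v = sumR n (fun i => d (gam (tt i)) (gam (tt (S i))))) -> v = t - s).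
  { intros v [n [tt [Hp ->]]]. apply (geo_sum s t); auto; lra. }
  destruct (lub_fin (fun v => exists n tt, is_partition s t n tt /\ v = sumR n (fun i => d (gam (tt i)) (gam (tt (S i))))) (t - s) (t - s)) as [H1 H2].
  - exists 1%nat, (two_part s t). split. apply two_part_ok; lra. symmetry; apply (geo_sum s t); try lra. apply two_part_ok; lra.
  - intros v Hv. rewrite (E v Hv). lra.
  - rewrite H1. f_equal. lra. Qed.

Lemma geo_curve s t : 0 <= s <= t -> t <= d x y -> is_curve d gam s t.
Proof. intros Hs Ht. split. lra. intros u Hu e He. exists e. split; auto.
  intros u' Hu' Hlt. destruct Hg as [_ [_ Hgd]]. rewrite Hgd by lra.
  rewrite Rabs_minus_sym; auto. Qed.

Lemma geo_rect s t : 0 <= s <= t -> t <= d x y -> rectifiable d gam s t.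
Proof. intros. split. apply geo_curve; auto. rewrite geo_len; auto. reflexivity. Qed.

Lemma geo_dx u : 0 <= u <= d x y -> d x (gam u) = u.
Proof. intros Hu. destruct Hg as [H0 [_ Hgd]]. rewrite <- H0 at 1. rewrite Hgd by lra.
  rewrite Rabs_left1 by lra. lra. Qed.

End Geo.

Lemma len_nonneg {X} (d : X -> X -> R) (Hm : is_metric d) g a b : a <= b ->
  0 <= real (curve_length d g a b).
Proof. intros Hab. apply real_nonneg. eapply Rbar_le_trans; [|apply lub_ge].
  2:{ exists 1%nat, (two_part a b). split. apply two_part_ok; auto. reflexivity. }
  simpl. destruct Hm as [H0 _]. specialize (H0 (g a) (g b)). lra. Qed.

Lemma LI_nonneg {X} (d : X -> X -> R) (Hm : is_metric d) (rho : X -> R) g a b v :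
  a <= b -> (forall z, 0 <= rho z) -> Finite v = line_integral d rho g a b -> 0 <= v.
Proof. intros Hab Hr Hv.
  assert (H : Rbar_le (Finite (sumR 1 (fun i =>
           real (Glb_Rbar (fun r => exists s, two_part a b i <= s <= two_part a b (S i) /\ r = rho (g s)))
           * real (curve_length d g (two_part a b i) (two_part a b (S i)))))) (Finite v)).
  { rewrite Hv. apply lub_ge. exists 1%nat, (two_part a b). split; auto. apply two_part_ok; auto. }
  simpl in H. eapply Rle_trans; [|exact H].
  assert (0 <= real (Glb_Rbar (fun r => exists s, a <= s <= b /\ r = rho (g s)))).
  { apply glb_real_nonneg. intros w [s [_ ->]]. auto. }
  pose proof (len_nonneg d Hm g a b Hab). rewrite Rplus_0_l. apply Rmult_le_pos; auto. Qed.

Lemma unif_le {X} (d : X -> X -> R) (Hm : is_metric d) p eps x y g a b v :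
  rectifiable d g a b -> g a = x -> g b = y ->
  Finite v = line_integral d (fun z => exp (- eps * d p z)) g a b ->
  uniformized d p eps x y <= v.
Proof. intros Hr Ha Hb Hv. unfold uniformized.
  apply (glb_fin _ v 0).
  - exists g, a, b. auto.
  - intros w [g' [a' [b' [Hr' [_ [_ Hw]]]]]]. eapply LI_nonneg; eauto.
    destruct Hr' as [[H _] _]; auto. intros; left; apply exp_pos. Qed.

Lemma unif_nonneg {X} (d : X -> X -> R) (Hm : is_metric d) p eps x y :
  0 <= uniformized d p eps x y.
Proof. unfold uniformized. apply glb_real_nonneg.
  intros w [g' [a' [b' [Hr' [_ [_ Hw]]]]]]. eapply LI_nonneg; eauto.
    destruct Hr' as [[H _] _]; auto. intros; left; apply exp_pos. Qed.

Section Up.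
Context {X : Type} (d : X -> X -> R) (Hm : is_metric d) (gam : R -> X) (x y p : X)
  (Hg : is_geodesic d gam x y) (eps : R) (Heps : 0 < eps).
Let K := exp (- eps * (d p x - d x y)).

Lemma rho_geo u : 0 <= u <= d x y -> exp (- eps * d p (gam u)) <= K.
Proof. intros Hu. unfold K. apply exp_le'. destruct Hm as [_ [_ [Hs Ht]]].
  pose proof (Ht p (gam u) x). rewrite (Hs (gam u) x) in H. rewrite (geo_dx d gam x y Hg u Hu) in H.
  apply Ropp_le_cancel. rewrite <- !Ropp_mult_distr_l, !Ropp_involutive.
  apply Rmult_le_compat_l; lra. Qed.

Lemma geo_li s t : 0 <= s <= t -> t <= d x y ->
  exists v, Finite v = line_integral d (fun z => exp (- eps * d p z)) gam s t /\ v <= K * (t - s).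
Proof. intros Hs Ht. unfold line_integral.
  set (F := fun v => exists (n : nat) (t0 : nat -> R), is_partition s t n t0 /\
     v = sumR n (fun i =>
           real (Glb_Rbar (fun r => exists s0, t0 i <= s0 <= t0 (S i) /\ r = exp (- eps * d p (gam s0))))
           * real (curve_length d gam (t0 i) (t0 (S i))))).
  assert (HF : forall w, F w -> w <= K * (t - s)).
  { intros w [n [tt [Hp ->]]]. pose proof (part_bounds _ _ _ _ Hp) as Hb.
    replace (K * (t - s)) with ((fun i => K * tt i) n - (fun i => K * tt i) O).
    2:{ destruct Hp as [H0 [Hn _]]. rewrite H0, Hn. ring. }
    rewrite <- (tele n (fun i => K * tt i)). apply sumR_le. intros i Hi.
    pose proof (Hb i ltac:(lia)). pose proof (Hb (S i) ltac:(lia)).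
    assert (tt i <= tt (S i)) by (destruct Hp as [_ [_ Hmo]]; auto).
    rewrite (geo_len d gam x y Hg) by lra. simpl.
    replace (K * tt (S i) - K * tt i) with (K * (tt (S i) - tt i)) by ring.
    apply Rmult_le_compat_r; [lra|].
    destruct (glb_fin (fun r => exists s0, tt i <= s0 <= tt (S i) /\ r = exp (- eps * d p (gam s0))) (exp (- eps * d p (gam (tt i)))) 0) as [_ H3].
    - exists (tt i). split; auto; lra.
    - intros w [s0 [_ ->]]. left; apply exp_pos.
    - eapply Rle_trans; [exact H3|]. apply rho_geo. lra. }
  assert (Hne : F (sumR 1 (fun i =>
           real (Glb_Rbar (fun r => exists s0, two_part s t i <= s0 <= two_part s t (S i) /\ r = exp (- eps * d p (gam s0))))
           * real (curve_length d gam (two_part s t i) (two_part s t (S i)))))).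
  { exists 1%nat, (two_part s t). split; auto. apply two_part_ok; lra. }
  destruct (lub_fin F _ _ Hne HF) as [H1 [_ H2]].
  exists (real (Lub_Rbar F)). split; auto. Qed.

Lemma unif_geo s t : 0 <= s <= t -> t <= d x y ->
  uniformized d p eps (gam s) (gam t) <= K * (t - s).
Proof. intros Hs Ht. destruct (geo_li s t Hs Ht) as [v [Hv Hle]].
  eapply Rle_trans; [|exact Hle]. eapply unif_le; eauto. apply (geo_rect d gam x y Hg); auto. Qed.

Lemma len_unif : Rbar_le (curve_length (uniformized d p eps) gam 0 (d x y)) (Finite (K * d x y)).
Proof. apply lub_le. intros w [n [tt [Hp ->]]]. pose proof (part_bounds _ _ _ _ Hp) as Hb.
    replace (K * d x y) with ((fun i => K * tt i) n - (fun i => K * tt i) O).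
    2:{ destruct Hp as [H0 [Hn _]]. rewrite H0, Hn. ring. }
    rewrite <- (tele n (fun i => K * tt i)). apply sumR_le. intros i Hi.
    pose proof (Hb i ltac:(lia)). pose proof (Hb (S i) ltac:(lia)).
    assert (tt i <= tt (S i)) by (destruct Hp as [_ [_ Hmo]]; auto).
    replace (K * tt (S i) - K * tt i) with (K * (tt (S i) - tt i)) by ring.
    apply unif_geo; lra. Qed.

End Up.

Section Low.
Context {X : Type} (d : X -> X -> R) (Hm : is_metric d) (g : R -> X) (a b : R)
  (Hc : is_curve d g a b).

Lemma sstar : 0 < d (g a) (g b) -> exists s, a <= s <= b /\ d (g a) (g s) = d (g a) (g b) /\
  forall u, a <= u <= s -> d (g a) (g u) <= d (g a) (g b).
Proof. intros HD. set (D := d (g a) (g b)) in *. set (x := g a) in *.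
  destruct Hm as [Hpos [Heq [Hsym Htri]]]. destruct Hc as [Hab Hcont].
  set (E := fun s => a <= s <= b /\ forall u, a <= u <= s -> d x (g u) < D).
  assert (Ea : E a). { split. lra. intros u Hu. replace u with a by lra. unfold x. rewrite (proj2 (Heq _ _) eq_refl). auto. }
  assert (Eb : bound E). { exists b. intros s [Hs _]. lra. }
  destruct (completeness E Eb (ex_intro _ a Ea)) as [m [Hub Hl]].
  assert (Ham : a <= m) by (apply Hub; auto).
  assert (Hmb : m <= b) by (apply Hl; intros s [Hs _]; lra).
  assert (A : forall u, a <= u < m -> d x (g u) < D).
  { intros u Hu. destruct (classic (exists s, E s /\ u < s)) as [[s [[Hs1 Hs2] Hus]]|Hn].
    - apply Hs2; lra.
    - exfalso. assert (m <= u). { apply Hl. intros s Hs. destruct (Rle_or_lt s u); auto. exfalso; apply Hn; eauto. } lra. }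
  assert (B : d x (g m) <= D).
  { destruct (Rle_or_lt (d x (g m)) D) as [|Hlt]; auto. exfalso.
    destruct (Hcont m ltac:(lra) (d x (g m) - D) ltac:(lra)) as [del [Hdel Hdl]].
    destruct (Rle_or_lt m a) as [Hma|Hma].
    - replace m with a in Hlt by lra. unfold x in Hlt. rewrite (proj2 (Heq _ _) eq_refl) in Hlt. lra.
    - set (u := Rmax a (m - del/2)).
      assert (Hu1 : a <= u) by apply Rmax_l. assert (Hu2 : m - del/2 <= u) by apply Rmax_r.
      assert (Hu3 : u < m) by (unfold u; apply Rmax_lub_lt; lra).
      pose proof (A u ltac:(lra)). pose proof (Hdl u ltac:(lra) ltac:(rewrite Rabs_left; lra)).
      pose proof (Htri x (g u) (g m)). rewrite (Hsym (g u) (g m)) in H1. lra. }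
  assert (C : D <= d x (g m)).
  { destruct (Rle_or_lt D (d x (g m))) as [|Hlt]; auto. exfalso.
    destruct (Rle_or_lt b m) as [Hbm|Hbm].
    - replace m with b in Hlt by lra. unfold D in Hlt. lra.
    - destruct (Hcont m ltac:(lra) (D - d x (g m)) ltac:(lra)) as [del [Hdel Hdl]].
      set (s' := Rmin b (m + del/2)).
      assert (Hs1 : s' <= b) by apply Rmin_l. assert (Hs2 : s' <= m + del/2) by apply Rmin_r.
      assert (Hs3 : m < s') by (unfold s'; apply Rmin_glb_lt; lra).
      assert (E s'). { split. lra. intros u Hu. destruct (Rlt_or_le u m). apply A; lra.
        pose proof (Hdl u ltac:(lra) ltac:(rewrite Rabs_right; lra)). pose proof (Htri x (g m) (g u)). lra. }
      pose proof (Hub s' H). lra. }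
  exists m. split. lra. split. lra. intros u Hu. destruct (Rlt_or_le u m). left; apply A; lra.
  replace u with m by lra. auto. Qed.

Lemma sublen s : a <= s <= b -> Rbar_le (curve_length d g a s) (curve_length d g a b).
Proof. intros Hs. apply (proj2 (Lub_Rbar_correct _)). intros w [n [t [Hp ->]]].
  set (t' := fun i => if Nat.leb i n then t i else b).
  assert (Hp' : is_partition a b (S n) t').
  { destruct Hp as [H0 [Hn Hmo]]. split; [unfold t'; simpl; auto|]. split.
    + unfold t'. replace (Nat.leb (S n) n) with false by (symmetry; apply Nat.leb_gt; lia). auto.
    + intros i Hi. unfold t'. destruct (Nat.leb_spec i n); destruct (Nat.leb_spec (S i) n); try lia.
      apply Hmo; lia. all: try (replace i with n by lia); lra. }
  eapply Rbar_le_trans; [|apply lub_ge; exists (S n), t'; split; [exact Hp'|reflexivity]].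
  simpl. assert (sumR n (fun i => d (g (t' i)) (g (t' (S i)))) = sumR n (fun i => d (g (t i)) (g (t (S i))))).
    { apply sumR_ext. intros i Hi. unfold t'. replace (Nat.leb i n) with true by (symmetry; apply Nat.leb_le; lia).
      replace (Nat.leb (S i) n) with true by (symmetry; apply Nat.leb_le; lia). auto. }
  rewrite H. destruct Hm as [Hpos _]. pose proof (Hpos (g (t' n)) (g (t' (S n)))). lra.
Qed.

End Low.

Definition three_part (a s b : R) := fun i : nat => match i with O => a | 1%nat => s | _ => b end.

Lemma li_lower {X} (d : X -> X -> R) (Hm : is_metric d) p eps (Heps : 0 < eps) g a b x y v :
  rectifiable d g a b -> g a = x -> g b = y ->
  Finite v = line_integral d (fun z => exp (- eps * d p z)) g a b ->
  exp (- eps * (d p x + d x y)) * d x y <= v.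
Proof. intros [Hc Hfin] Ha Hb Hv.
  assert (Hab : a <= b) by (destruct Hc; auto).
  assert (Hv0 : 0 <= v). { eapply LI_nonneg; eauto. intros; left; apply exp_pos. }
  pose proof Hm as [Hpos [Heq [Hsym Htri]]].
  destruct (Rle_or_lt (d x y) 0) as [H0|H0].
  { assert (d x y = 0) by (pose proof (Hpos x y); lra). rewrite H, Rmult_0_r. auto. }
  subst x y. destruct (sstar d Hm g a b Hc H0) as [s [Hs [Hds Hle]]].
  set (D := d (g a) (g b)) in *.
  set (tt := three_part a s b).
  assert (Hp : is_partition a b 2 tt).
  { split; [reflexivity|split; [reflexivity|]]. intros i Hi. destruct i as [|[|]]; simpl; lra || lia. }
  assert (H := lub_ge (fun v => exists (n : nat) (t : nat -> R), is_partition a b n t /\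
     v = sumR n (fun i =>
           real (Glb_Rbar (fun r => exists s, t i <= s <= t (S i) /\ r = exp (- eps * d p (g s))))
           * real (curve_length d g (t i) (t (S i))))) _ (ex_intro _ 2%nat (ex_intro _ tt (conj Hp eq_refl)))).
  fold (line_integral d (fun z => exp (- eps * d p z)) g a b) in H. rewrite <- Hv in H. simpl in H.
  set (g0 := real (Glb_Rbar (fun r => exists s0, a <= s0 <= s /\ r = exp (- eps * d p (g s0))))) in H.
  set (g1 := real (Glb_Rbar (fun r => exists s0, s <= s0 <= b /\ r = exp (- eps * d p (g s0))))) in H.
  set (L0 := real (curve_length d g a s)) in H.
  set (L1 := real (curve_length d g s b)) in H.
  assert (Hg1 : 0 <= g1). { apply glb_real_nonneg. intros w [s0 [_ ->]]; left; apply exp_pos. }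
  assert (HL1 : 0 <= L1) by (apply len_nonneg; auto; lra).
  assert (Hg0 : exp (- eps * (d p (g a) + D)) <= g0).
  { apply (glb_fin _ (exp (- eps * d p (g a)))).
    - exists a. split; [lra|]. reflexivity.
    - intros w [s0 [Hs0 ->]]. apply exp_le'. pose proof (Hle s0 Hs0). pose proof (Htri p (g a) (g s0)).
      apply Ropp_le_cancel. rewrite <- !Ropp_mult_distr_l, !Ropp_involutive.
      apply Rmult_le_compat_l; lra. }
  assert (HL0 : D <= L0).
  { pose proof (sublen d Hm g a b s Hs) as Hsub.
    assert (Hge : Rbar_le (Finite D) (curve_length d g a s)).
    { rewrite <- Hds. apply lub_ge. exists 1%nat, (two_part a s). split. apply two_part_ok; lra. simpl; ring. }
    unfold L0. unfold is_finite in Hfin. destruct (curve_length d g a b) eqn:E; simpl in Hfin; try discriminate.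
    destruct (curve_length d g a s); simpl in *; tauto. }
  pose proof (exp_pos (- eps * (d p (g a) + D))).
  assert (0 <= g1 * L1) by (apply Rmult_le_pos; auto).
  assert (exp (- eps * (d p (g a) + D)) * D <= g0 * L0).
  { apply Rmult_le_compat; lra. }
  lra. Qed.

Theorem proposition3p6 :
  forall eps M : R, 0 < eps -> 0 < M ->
  exists C : R, 1 <= C /\
    forall (X : Type) (d : X -> X -> R) (p : X), geodesic_space d ->
    forall (x y : X) (gamma : R -> X),
      d x y <= M -> is_geodesic d gamma x y ->
      Rbar_le (curve_length (uniformized d p eps) gamma 0 (d x y))
              (Finite (C * uniformized d p eps x y)).
Proof.
  intros eps M Heps HM. exists (exp (2 * eps * M)). split.
  { rewrite <- exp_0. apply exp_le'. nra. }
  intros X d p [Hm _] x y gam HD Hg.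
  pose proof (len_unif d Hm gam x y p Hg eps Heps) as Hup.
  assert (HD0 : 0 <= d x y) by (destruct Hm; auto).
  set (m := exp (- eps * (d p x + d x y)) * d x y).
  assert (Hlow : m <= uniformized d p eps x y).
  { destruct (geo_li d Hm gam x y p Hg eps Heps 0 (d x y)) as [v0 [Hv0 _]]; try lra.
    unfold uniformized. apply (glb_fin _ v0).
    - exists gam, 0, (d x y). pose proof Hg as [H1 [H2 _]]. split; [apply (geo_rect d gam x y Hg); lra|].
      split; [auto|]. split; [auto|]. exact Hv0.
    - intros w [g' [a' [b' [Hr' [Ha [Hb Hw]]]]]]. eapply li_lower; eauto. }
  eapply Rbar_le_trans; [exact Hup|]. simpl.
  set (K := exp (- eps * (d p x - d x y))).
  assert (K <= exp (2 * eps * M) * exp (- eps * (d p x + d x y))).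
  { rewrite <- exp_plus. apply exp_le'. nra. }
  pose proof (exp_pos (2 * eps * M)).
  assert (K * d x y <= exp (2 * eps * M) * m).
  { unfold m. rewrite <- Rmult_assoc. apply Rmult_le_compat_r; auto. }
  assert (exp (2 * eps * M) * m <= exp (2 * eps * M) * uniformized d p eps x y).
  { apply Rmult_le_compat_l; lra. }
  lra.
Qed.
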